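(* The following three assignment rules are majoritarian: (1) the rule $\mathit{PO}$ returning all Pareto-optimal assignments; (2) least unpopularity, returning all assignments minimizing the unpopularity margin; (3) mixed popularity, returning all assignments that lie in the support of some mixed popular distribution.
   Context: Let $N=\{1,\dots,n\}$ be agents and $H$ a set of $n$ houses. A profile $P=(\succ_1,\dots,\succ_n)$ gives each agent a strict linear order on $H$. An assignment is a bijection $\mu:N\to H$; $M$ is the set of all assignments. Agent $x$ weakly prefers $\mu$ to $\lambda$ if $\mu(x)\succ_x\lambda(x)$ or $\mu(x)=\lambda(x)$, and strictly prefers it if $\mu(x)\succ_x\lambda(x)$. Let $N_{\mu,\lambda}$ be the set of agents weakly preferring $\mu$ to $\lambda$; $\mu\succsim\lambda$ if $|N_{\mu,\lambda}|\ge|N_{\lambda,\mu}|$. The majority graph of $P$ is $G_P=(M,\{(\mu,\lambda):\mu\succsim\lambda\})$. An assignment rule $F$ maps every profile $P$ to a nonempty set $F(P)\subseteq M$; it is majoritarian if $F(P)=F(P')$ for all profiles $P,P'$ with $G_P=G_{P'}$. $\mu$ Pareto-dominates $\lambda$ if every agent weakly prefers $\mu$ to $\lambda$ and some agent strictly prefers $\mu$ to $\lambda$; $\mu$ is Pareto-optimal if no assignment Pareto-dominates it. The unpopularity margin of $\mu$ is $\max_{\lambda\in M}(|N_{\lambda,\mu}|-|N_{\mu,\lambda}|)$; least unpopularity returns all assignments minimizing it. A probability distribution $\pi$ on $M$ is mixed popular if for every $\lambda\in M$, $\sum_{\mu\in M}\pi(\mu)\,(|N_{\mu,\lambda}|-|N_{\lambda,\mu}|)\ge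 0$; mixed popularity returns all assignments $\mu$ with $\pi(\mu)>0$ for some mixed popular $\pi$. *)

(* Defs.v *)
From HB Require Import structures.
From mathcomp Require Import all_boot all_order all_algebra.
Set Implicit Arguments. Unset Strict Implicit. Unset Printing Implicit Defensive.
Import Order.TTheory GRing.Theory Num.Theory.

Section HouseAllocation.
Variables (n : nat) (H : finType).

(* An assignment: an injective map agents -> houses (a bijection when #|H| = n). *)
Definition assignment := {f : {ffun 'I_n -> H} | injectiveb f}.

Definition asg (mu : assignment) (x : 'I_n) : H := (val mu) x.

(* A profile: for each agent x, a relation  pref x a b  meaning  a ≻_x b. *)
Definition profile := 'I_n -> rel H.

Definition strict_linear_order (r : rel H) : Prop :=
  irreflexive r /\ transitive r /\ (forall a b, a != b -> r a b || r b a).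

Definition valid_profile (P : profile) : Prop :=
  forall x, strict_linear_order (P x).

Definition weakly_prefers (P : profile) (x : 'I_n) (mu lam : assignment) : bool :=
  P x (asg mu x) (asg lam x) || (asg mu x == asg lam x).

Definition strictly_prefers (P : profile) (x : 'I_n) (mu lam : assignment) : bool :=
  P x (asg mu x) (asg lam x).

Definition Nset (P : profile) (mu lam : assignment) : {set 'I_n} :=
  [set x | weakly_prefers P x mu lam].

(* edge (mu, lam) of the majority graph G_P, i.e. mu ≿ lam *)
Definition maj_edge (P : profile) (mu lam : assignment) : bool :=
  #|Nset P lam mu| <= #|Nset P mu lam|.

Definition rule := profile -> assignment -> Prop.

Definition majoritarian (F : rule) : Prop :=
  forall P P' : profile, valid_profile P -> valid_profile P' ->
    (forall mu lam, maj_edge P mu lam = maj_edge P' mu lam) ->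
    forall mu, F P mu <-> F P' mu.

Definition pareto_dominates (P : profile) (mu lam : assignment) : Prop :=
  (forall x, weakly_prefers P x mu lam) /\ (exists x, strictly_prefers P x mu lam).

Definition pareto_optimal (P : profile) (mu : assignment) : Prop :=
  ~ exists lam, pareto_dominates P lam mu.

Definition PO : rule := pareto_optimal.

(* (2) unpopularity margin: max over lam of |N_{lam,mu}| - |N_{mu,lam}|.
   The fold starts at 0, which does not change the maximum since lam = mu gives 0. *)
Definition unpopularity_margin (P : profile) (mu : assignment) : int :=
  \big[Num.max/0%R]_(lam : assignment)
     ((#|Nset P lam mu|)%:Z - (#|Nset P mu lam|)%:Z)%R.

Definition least_unpopularity : rule := fun P mu =>
  forall nu : assignment, (unpopularity_margin P mu <= unpopularity_margin P nu)%R.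

Definition is_distribution (R : realFieldType) (pi : assignment -> R) : Prop :=
  (forall mu, 0 <= pi mu)%R /\ (\sum_(mu : assignment) pi mu = 1)%R.

Definition mixed_popular (R : realFieldType) (P : profile) (pi : assignment -> R) : Prop :=
  is_distribution pi /\
  forall lam : assignment,
    (0 <= \sum_(mu : assignment)
            pi mu * ((#|Nset P mu lam|)%:R - (#|Nset P lam mu|)%:R))%R.

Definition mixed_popularity (R : realFieldType) : rule := fun P mu =>
  exists pi : assignment -> R, mixed_popular P pi /\ (0 < pi mu)%R.

End HouseAllocation.

(* Main.v *)
Require Import Defs.
From mathcomp Require Import all_boot all_order all_algebra.
From mathcomp Require Import zify.
From mathcomp Require Import perm.
Set Implicit Arguments. Unset Strict Implicit. Unset Printing Implicit Defensive.
Import Order.TTheory GRing.Theory Num.Theory.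
Local Open Scope ring_scope.

Definition pm : seq int := [:: 1; -1].
Definition cs : seq int := [:: -2; 0; 2].

Section Asg.
Variables (n : nat) (H : finType).
Hypothesis eqH : #|H| = n.
Local Notation asgT := (assignment n H).

Lemma asg_inj (mu : asgT) : injective (asg mu).
Proof. by move=> x y; rewrite /asg; move/injectiveP: (valP mu); apply. Qed.

Lemma asg_bij (mu : asgT) : bijective (asg mu).
Proof. by apply: inj_card_bij (@asg_inj mu) _; rewrite card_ord eqH. Qed.

Lemma asg_onto (mu : asgT) h : exists x, asg mu x = h.
Proof. by case: (asg_bij mu) => g K1 K2; exists (g h). Qed.

Lemma comp_inj (mu : asgT) (g : 'I_n -> 'I_n) :
  injective g -> injectiveb [ffun v => asg mu (g v)].
Proof. by move=> gi; apply/injectiveP => x y; rewrite !ffunE => /asg_inj; apply: gi. Qed.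

Definition comp_asg (mu : asgT) (g : 'I_n -> 'I_n) (gi : injective g) : asgT :=
  exist (fun f : {ffun 'I_n -> H} => injectiveb f) [ffun v => asg mu (g v)] (comp_inj mu gi).

Lemma comp_asgE mu g (gi : injective g) v : asg (comp_asg mu gi) v = asg mu (g v).
Proof. by rewrite /asg /= ffunE. Qed.

Lemma base_inj : injectiveb [ffun v : 'I_n => enum_val (cast_ord (esym eqH) v)].
Proof.
apply/injectiveP => x y; rewrite !ffunE => /enum_val_inj; exact: cast_ord_inj.
Qed.

Definition base_asg : asgT := exist (fun f : {ffun 'I_n -> H} => injectiveb f) _ base_inj.

Lemma upd_ex (mu : asgT) y h : exists nu : asgT, asg nu y = h /\
  forall v, v != y -> asg mu v != h -> asg nu v = asg mu v.
Proof.
have [x Hx] := asg_onto mu h.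
exists (comp_asg mu (@perm_inj _ (tperm y x))); split.
  by rewrite comp_asgE tpermL.
move=> v vy vh; rewrite comp_asgE tpermD //; first by rewrite eq_sym.
by rewrite eq_sym; apply: contraNneq vh => ->; rewrite Hx.
Qed.

Lemma asg2 y1 y2 h1 h2 : y1 != y2 -> h1 != h2 ->
  exists b : asgT, asg b y1 = h1 /\ asg b y2 = h2.
Proof.
move=> y12 h12.
have [b1 [E1 _]] := upd_ex base_asg y1 h1.
have [b2 [E2 F2]] := upd_ex b1 y2 h2.
exists b2; split => //; rewrite F2 ?E1 // eq_sym //.
Qed.

Lemma asg3 y1 y2 y3 h1 h2 h3 : y1 != y2 -> y1 != y3 -> y2 != y3 ->
  h1 != h2 -> h1 != h3 -> h2 != h3 ->
  exists b : asgT, [/\ asg b y1 = h1, asg b y2 = h2 & asg b y3 = h3].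
Proof.
move=> y12 y13 y23 h12 h13 h23.
have [b1 [E1 _]] := upd_ex base_asg y1 h1.
have [b2 [E2 F2]] := upd_ex b1 y2 h2.
have [b3 [E3 F3]] := upd_ex b2 y3 h3.
exists b3; split => //.
  by rewrite F3 ?F2 ?E1 // ?eq_sym // F2 ?E1 // eq_sym.
by rewrite F3 ?E2 // eq_sym.
Qed.

Lemma sum2 (F : 'I_n -> int) x y : x != y ->
  (forall v, v != x -> v != y -> F v = 0) -> \sum_v F v = F x + F y.
Proof.
move=> xy HF; rewrite (bigD1 x) //= (bigD1 y) 1?eq_sym //= big1 ?addr0 ?addrA //.
by move=> v /andP [vx vy]; apply: HF.
Qed.

Lemma sum3 (F : 'I_n -> int) x y z : x != y -> x != z -> y != z ->
  (forall v, v != x -> v != y -> v != z -> F v = 0) -> \sum_v F v = F x + F y + F z.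
Proof.
move=> xy xz yz HF; rewrite (bigD1 x) //= (bigD1 y) 1?eq_sym //= (bigD1 z) /=.
  rewrite big1 ?addr0 ?addrA // => v /andP [/andP [vx vy] vz]; exact: HF.
by rewrite eq_sym xz eq_sym yz.
Qed.

End Asg.
Definition core_ok (p1 p2 p3 q1 q2 q3 r1 r2 r3 c1 c2 c3 : int) : bool :=
  [&& p1 - c1 \in pm, p2 - c1 \in pm, p3 - c1 \in pm,
      q1 - c2 \in pm, q2 - c2 \in pm, q3 - c2 \in pm,
      r1 - c3 \in pm, r2 - c3 \in pm, r3 - c3 \in pm,
      p1 + q1 + r1 \in pm, p2 + q2 + r2 \in pm, p3 + q3 + r3 \in pm,
      (p1 - c1) + (q1 - c2) + (r1 - c3) \in pm,
      (p2 - c1) + (q2 - c2) + (r2 - c3) \in pm,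
      (p3 - c1) + (q3 - c2) + (r3 - c3) \in pm,
      (0 <= p1 + q2 + r3) == (0 <= (p1 - c1) + (q2 - c2) + (r3 - c3)),
      (0 <= p1 + q3 + r2) == (0 <= (p1 - c1) + (q3 - c2) + (r2 - c3)),
      (0 <= p2 + q1 + r3) == (0 <= (p2 - c1) + (q1 - c2) + (r3 - c3)),
      (0 <= p2 + q3 + r1) == (0 <= (p2 - c1) + (q3 - c2) + (r1 - c3)),
      (0 <= p3 + q1 + r2) == (0 <= (p3 - c1) + (q1 - c2) + (r2 - c3))
    & (0 <= p3 + q2 + r1) == (0 <= (p3 - c1) + (q2 - c2) + (r1 - c3))]
  ==> (c1 + c2 + c3 == 0).

Lemma core_all :
  all (fun p1 => all (fun p2 => all (fun p3 =>
  all (fun q1 => all (fun q2 => all (fun q3 =>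
  all (fun r1 => all (fun r2 => all (fun r3 =>
  all (fun c1 => all (fun c2 => all (fun c3 =>
    core_ok p1 p2 p3 q1 q2 q3 r1 r2 r3 c1 c2 c3) cs) cs) cs) pm) pm) pm) pm) pm) pm) pm) pm) pm.
Proof. vm_compute. reflexivity. Qed.
Section Prof.
Variables (n : nat) (H : finType).
Local Notation asgT := (assignment n H).

Definition w (P : profile n H) v (a b : H) : int :=
  (P v a b || (a == b))%:Z - (P v b a || (b == a))%:Z.
Definition marg (P : profile n H) (al be : asgT) : int :=
  (#|Nset P al be|)%:Z - (#|Nset P be al|)%:Z.

Lemma card_setZ (p : pred 'I_n) : (#|[set x | p x]|)%:Z = \sum_x (p x)%:Z.
Proof.
have -> : #|[set x | p x]| = (\sum_x p x)%N.
  rewrite -sum1_card big_mkcond /=; apply: eq_bigr => x _; rewrite inE; by case: (p x).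
by rewrite -natz natr_sum; apply: eq_bigr => x _; rewrite natz.
Qed.

Lemma margE P al be : marg P al be = \sum_v w P v (asg al v) (asg be v).
Proof.
rewrite /marg /Nset !card_setZ -sumrB; apply: eq_bigr => v _.
by rewrite /w /weakly_prefers.
Qed.

Lemma marg_opp P al be : marg P be al = - marg P al be.
Proof. by rewrite /marg opprB. Qed.

Lemma edgeE P al be : maj_edge P al be = (0 <= marg P al be).
Proof. by rewrite /maj_edge /marg subr_ge0 lez_nat. Qed.

Lemma w_aa P v a : w P v a a = 0.
Proof. by rewrite /w eqxx !orbT subrr. Qed.

Lemma w_anti P v a b : w P v b a = - w P v a b.
Proof. by rewrite /w opprB. Qed.

Section Valid.
Variable P : profile n H.
Hypothesis vP : valid_profile P.

Lemma asym v a b : P v a b -> P v b a = false.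
Proof.
case: (vP v) => irr [tr _] ab; apply/negP => ba.
by move: (tr _ _ _ ab ba); rewrite irr.
Qed.

Lemma w_neq v a b : a != b -> w P v a b = if P v a b then 1 else -1.
Proof.
move=> ab; rewrite /w (negbTE ab) eq_sym (negbTE ab) !orbF.
case: (vP v) => irr [tr tot].
case E: (P v a b); first by rewrite (asym E).
by move: (tot _ _ ab); rewrite E /= => ->.
Qed.

Lemma w_pm v a b : a != b -> w P v a b \in pm.
Proof. by move=> ab; rewrite w_neq //; case: (P v a b). Qed.

Lemma w_tri v a b e : a != b -> a != e -> b != e ->
  w P v b a + w P v e b + w P v a e \in pm.
Proof.
move=> ab ae be; rewrite !w_neq // 1?eq_sym //.
case: (vP v) => irr [tr tot].
case Eba: (P v b a); case Eeb: (P v e b); case Eae: (P v a e) => //.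
- by move: (tr _ _ _ (tr _ _ _ Eae Eeb) Eba); rewrite irr.
- have Hab : P v a b by move: (tot _ _ ab); rewrite Eba orbF.
  have Hbe : P v b e by move: (tot _ _ be); rewrite Eeb orbF.
  have Hea : P v e a by move: (tot _ _ ae); rewrite Eae.
  by move: (tr _ _ _ (tr _ _ _ Hbe Hea) Hab); rewrite irr.
Qed.

Lemma tot_count v a b :
  ((P v a b || (a == b)) + (P v b a || (b == a)) = 1 + (a == b))%N.
Proof.
case: (eqVneq a b) => [<-|ab]; first by rewrite !orbT.
rewrite !orbF.
case: (vP v) => irr [tr tot].
case E: (P v a b); first by rewrite (asym E).
by move: (tot _ _ ab); rewrite E /= => ->.
Qed.

Lemma card_sum al be : (#|Nset P al be|)%:Z + (#|Nset P be al|)%:Z =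
  \sum_v (1 + (asg al v == asg be v))%N%:Z.
Proof.
rewrite /Nset !card_setZ -big_split /=; apply: eq_bigr => v _.
by rewrite -PoszD /weakly_prefers tot_count.
Qed.

Lemma dom_iff lam mu : pareto_dominates P lam mu <->
  (#|Nset P lam mu| = n /\ #|Nset P mu lam| < n)%N.
Proof.
split.
  case=> all [x sx]; split.
    have -> : Nset P lam mu = setT by apply/setP => y; rewrite inE in_setT all.
    by rewrite cardsT card_ord.
  have : x \notin Nset P mu lam.
    rewrite inE /weakly_prefers negb_or (asym sx) /=.
    by apply/eqP => E; move: sx; rewrite /strictly_prefers E; case: (vP x) => ->.
  move=> xn; rewrite -[X in (_ < X)%N](card_ord n) -cardsT; apply: proper_card.
  by rewrite properT; apply: contraNneq xn => ->; rewrite in_setT.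
case=> c1 c2; split.
  move=> x; have E0 : #|~: Nset P lam mu| = 0%N.
    by move: (cardsC (Nset P lam mu)); rewrite c1 card_ord; lia.
  have E := cards0_eq E0.
  have : x \notin ~: Nset P lam mu by rewrite E in_set0.
  by rewrite inE negbK inE.
have : ~: Nset P mu lam != set0.
  apply/eqP => E; have := cardsC (Nset P mu lam); rewrite E cards0 addn0 card_ord.
  by move=> E2; move: c2; rewrite E2 ltnn.
case/set0Pn => x; rewrite !inE /weakly_prefers negb_or => /andP [nx ne].
exists x; rewrite /strictly_prefers.
have : x \in Nset P lam mu.
  have E0 : #|~: Nset P lam mu| = 0%N.
    by move: (cardsC (Nset P lam mu)); rewrite c1 card_ord; lia.
  have E := cards0_eq E0.
  have : x \notin ~: Nset P lam mu by rewrite E in_set0.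
  by rewrite inE negbK.
by rewrite inE /weakly_prefers eq_sym (negbTE ne) orbF.
Qed.

End Valid.
End Prof.

Lemma core (p1 p2 p3 q1 q2 q3 r1 r2 r3 c1 c2 c3 : int) :
  p1 \in pm -> p2 \in pm -> p3 \in pm -> q1 \in pm -> q2 \in pm -> q3 \in pm ->
  r1 \in pm -> r2 \in pm -> r3 \in pm -> c1 \in cs -> c2 \in cs -> c3 \in cs ->
  [&& p1 - c1 \in pm, p2 - c1 \in pm, p3 - c1 \in pm,
      q1 - c2 \in pm, q2 - c2 \in pm, q3 - c2 \in pm,
      r1 - c3 \in pm, r2 - c3 \in pm, r3 - c3 \in pm,
      p1 + q1 + r1 \in pm, p2 + q2 + r2 \in pm, p3 + q3 + r3 \in pm,
      (p1 - c1) + (q1 - c2) + (r1 - c3) \in pm,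
      (p2 - c1) + (q2 - c2) + (r2 - c3) \in pm,
      (p3 - c1) + (q3 - c2) + (r3 - c3) \in pm,
      (0 <= p1 + q2 + r3) == (0 <= (p1 - c1) + (q2 - c2) + (r3 - c3)),
      (0 <= p1 + q3 + r2) == (0 <= (p1 - c1) + (q3 - c2) + (r2 - c3)),
      (0 <= p2 + q1 + r3) == (0 <= (p2 - c1) + (q1 - c2) + (r3 - c3)),
      (0 <= p2 + q3 + r1) == (0 <= (p2 - c1) + (q3 - c2) + (r1 - c3)),
      (0 <= p3 + q1 + r2) == (0 <= (p3 - c1) + (q1 - c2) + (r2 - c3))
    & (0 <= p3 + q2 + r1) == (0 <= (p3 - c1) + (q2 - c2) + (r1 - c3))] ->
  c1 + c2 + c3 = 0.
Proof.
move=> Hp1 Hp2 Hp3 Hq1 Hq2 Hq3 Hr1 Hr2 Hr3 Hc1 Hc2 Hc3 conj.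
move: core_all => /allP/(_ _ Hp1)/allP/(_ _ Hp2)/allP/(_ _ Hp3)
  /allP/(_ _ Hq1)/allP/(_ _ Hq2)/allP/(_ _ Hq3)
  /allP/(_ _ Hr1)/allP/(_ _ Hr2)/allP/(_ _ Hr3)
  /allP/(_ _ Hc1)/allP/(_ _ Hc2)/allP/(_ _ Hc3).
by rewrite /core_ok => /implyP/(_ conj)/eqP.
Qed.

Lemma pm_add x y : x \in pm -> y \in pm -> x + y \in cs.
Proof. by rewrite !inE => /orP[]/eqP-> /orP[]/eqP->. Qed.

Lemma cs_sign x y : x \in cs -> y \in cs ->
  (0 <= x) = (0 <= y) -> (0 <= -x) = (0 <= -y) -> x = y.
Proof. by rewrite !inE => /or3P[]/eqP-> /or3P[]/eqP->. Qed.

Lemma pm_cs p c : p \in pm -> p - c \in pm -> c \in cs.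
Proof.
move=> hp hq; have -> : c = p - (p - c) by rewrite opprB addrC subrK.
move: (p - c) hq => q; move: hp; rewrite !inE => /orP[]/eqP-> /orP[]/eqP->; by [].
Qed.

Section Main.
Variables (n : nat) (H : finType).
Hypothesis eqH : #|H| = n.
Variables P P' : profile n H.
Hypotheses (vP : valid_profile P) (vP' : valid_profile P').
Hypothesis E : forall mu lam, maj_edge P mu lam = maj_edge P' mu lam.
Local Notation asgT := (assignment n H).

Definition d v a b := w P v a b - w P' v a b.

Lemma d_aa v a : d v a a = 0.
Proof. by rewrite /d !w_aa subrr. Qed.

Lemma d_anti v a b : d v b a = - d v a b.
Proof. by rewrite /d !(w_anti _ _ a b); lia. Qed.

Lemma sgnE (al be : asgT) : (0 <= marg P al be) = (0 <= marg P' al be).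
Proof. by rewrite -!edgeE E. Qed.

Lemma d_indep x y a b : x != y -> a != b -> d x a b = d y a b.
Proof.
move=> xy ab.
have ba : b != a by rewrite eq_sym.
have [be [Bx By]] := asg2 eqH xy ba.
pose al := comp_asg be (@perm_inj _ (tperm x y)).
have mE : forall Q, marg Q al be = w Q x a b + w Q y b a.
  move=> Q; rewrite margE (sum2 xy).
    by rewrite !comp_asgE tpermL tpermR Bx By.
  move=> v vx vy; rewrite comp_asgE tpermD ?w_aa //; by rewrite eq_sym.
have h1 := sgnE al be.
have h2 := sgnE be al.
rewrite !(marg_opp _ al be) in h2.
have Heq := cs_sign (pm_add (w_pm vP x ab) (w_pm vP y ba))
   (pm_add (w_pm vP' x ab) (w_pm vP' y ba)).
rewrite -!mE in Heq; have {Heq} := Heq h1 h2.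
rewrite !mE !(w_anti _ y a b) /d => Heq.
lia.
Qed.

Lemma triple v a b e : a != b -> a != e -> b != e ->
  d v b a + d v e b + d v a e = 0.
Proof.
move=> ab ae be.
have ba : b != a by rewrite eq_sym.
have ea : e != a by rewrite eq_sym.
have eb : e != b by rewrite eq_sym.
have [x1 X1] := asg_onto eqH (base_asg eqH) a.
have [x2 X2] := asg_onto eqH (base_asg eqH) b.
have [x3 X3] := asg_onto eqH (base_asg eqH) e.
have n12 : x1 != x2 by apply: contraNneq ab => E12; rewrite -X1 -X2 E12.
have n13 : x1 != x3 by apply: contraNneq ae => E12; rewrite -X1 -X3 E12.
have n23 : x2 != x3 by apply: contraNneq be => E12; rewrite -X2 -X3 E12.
have cyc : forall y1 y2 y3, y1 != y2 -> y1 != y3 -> y2 != y3 ->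
  (0 <= w P y1 b a + w P y2 e b + w P y3 a e) =
  (0 <= w P' y1 b a + w P' y2 e b + w P' y3 a e).
  move=> y1 y2 y3 m12 m13 m23.
  have [b0 [B1 B2 B3]] := asg3 eqH m12 m13 m23 ab ae be.
  pose al := comp_asg (comp_asg b0 (@perm_inj _ (tperm y1 y2)))
                      (@perm_inj _ (tperm y2 y3)).
  have T1 : tperm y2 y3 y1 = y1 by rewrite tpermD // eq_sym.
  have T2 : tperm y1 y2 y3 = y3 by rewrite tpermD.
  have mE : forall Q, marg Q al b0 = w Q y1 b a + w Q y2 e b + w Q y3 a e.
    move=> Q; rewrite margE (sum3 m12 m13 m23).
      by rewrite !comp_asgE T1 !tpermL !tpermR T2 B1 B2 B3.
    move=> v' v1 v2 v3; rewrite !comp_asgE (@tpermD _ y2 y3) 1?eq_sym //.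
    by rewrite tpermD ?w_aa // eq_sym.
  by rewrite -!mE sgnE.
pose c1 := d x1 b a; pose c2 := d x1 e b; pose c3 := d x1 a e.
have K1 : forall x, w P x b a - c1 = w P' x b a.
  move=> x; case: (eqVneq x x1) => [->|xx]; first by rewrite /c1 /d; lia.
  by rewrite /c1 -(d_indep xx ba) /d; lia.
have K2 : forall x, w P x e b - c2 = w P' x e b.
  move=> x; case: (eqVneq x x1) => [->|xx]; first by rewrite /c2 /d; lia.
  by rewrite /c2 -(d_indep xx eb) /d; lia.
have K3 : forall x, w P x a e - c3 = w P' x a e.
  move=> x; case: (eqVneq x x1) => [->|xx]; first by rewrite /c3 /d; lia.
  by rewrite /c3 -(d_indep xx ae) /d; lia.
have C1 : c1 \in cs by apply: (pm_cs (w_pm vP x1 ba)); rewrite K1 (w_pm vP' x1 ba).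
have C2 : c2 \in cs by apply: (pm_cs (w_pm vP x1 eb)); rewrite K2 (w_pm vP' x1 eb).
have C3 : c3 \in cs by apply: (pm_cs (w_pm vP x1 ae)); rewrite K3 (w_pm vP' x1 ae).
have Hc := core (w_pm vP x1 ba) (w_pm vP x2 ba) (w_pm vP x3 ba)
                (w_pm vP x1 eb) (w_pm vP x2 eb) (w_pm vP x3 eb)
                (w_pm vP x1 ae) (w_pm vP x2 ae) (w_pm vP x3 ae) C1 C2 C3.
have m21 : x2 != x1 by rewrite eq_sym.
have m31 : x3 != x1 by rewrite eq_sym.
have m32 : x3 != x2 by rewrite eq_sym.
have {}Hc : c1 + c2 + c3 = 0.
  apply: Hc; rewrite !K1 !K2 !K3 !(w_pm vP') // !(w_tri vP) // !(w_tri vP') //.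
  by rewrite !cyc // !eqxx.
case: (eqVneq v x1) => [->|vx]; first exact: Hc.
by rewrite (d_indep vx ba) (d_indep vx eb) (d_indep vx ae).
Qed.

Lemma marg_eq (al be : asgT) : marg P al be = marg P' al be.
Proof.
case: (pickP (fun _ : H => true)) => [h0 _|none]; last first.
  by rewrite !margE !big1 // => v _; move: (none (asg al v)).
have [x0 _] := asg_onto eqH al h0.
pose f h := d x0 h h0.
have dE : forall v a b, d v a b = f a - f b.
  move=> v a b; case: (eqVneq a b) => [<-|ab]; first by rewrite d_aa subrr.
  have -> : d v a b = d x0 a b.
    by case: (eqVneq v x0) => [->//|vx]; apply: d_indep.
  rewrite /f; case: (eqVneq a h0) => [->|ah].
    by rewrite d_aa sub0r -d_anti.
  case: (eqVneq b h0) => [->|bh]; first by rewrite d_aa subr0.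
  have := triple x0 (a:=b) (b:=a) (e:=h0); rewrite eq_sym => /(_ ab bh ah).
  rewrite (d_anti x0 a h0); lia.
have S : forall mu : asgT, \sum_v f (asg mu v) = \sum_h f h.
  move=> mu; rewrite (reindex (asg mu)) //; exact: onW_bij (asg_bij eqH mu).
have : marg P al be - marg P' al be = 0.
  rewrite !margE -sumrB.
  transitivity (\sum_v (f (asg al v) - f (asg be v))).
    by apply: eq_bigr => v _; rewrite -/(d v (asg al v) (asg be v)) dE.
  by rewrite sumrB !S subrr.
lia.
Qed.

Lemma counts_eq (al be : asgT) : #|Nset P al be| = #|Nset P' al be|.
Proof.
have := card_sum vP al be; have := card_sum vP' al be.
have := marg_eq al be; rewrite /marg; lia.
Qed.

End Main.

Theorem corollary4p1 (R : realFieldType) (n : nat) (H : finType) :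
  #|H| = n ->
  majoritarian (@PO n H) /\
  majoritarian (@least_unpopularity n H) /\
  majoritarian (@mixed_popularity n H R).
Proof.
move=> eqH; split; [|split].
- move=> P P' vP vP' E mu; rewrite /PO /pareto_optimal.
  have D : forall lam, pareto_dominates P lam mu <-> pareto_dominates P' lam mu.
    move=> lam; split => h.
      apply/(dom_iff vP'); move/(dom_iff vP): h.
      by rewrite !(counts_eq eqH vP vP' E).
    apply/(dom_iff vP); move/(dom_iff vP'): h.
    by rewrite !(counts_eq eqH vP vP' E).
  split => np [lam dl]; apply: np; exists lam; exact/D.
- move=> P P' vP vP' E mu.
  have U : forall nu, unpopularity_margin P nu = unpopularity_margin P' nu.
    by move=> nu; apply: eq_bigr => lam _; rewrite !(counts_eq eqH vP vP' E).
  rewrite /least_unpopularity /=; split => h nu; move: (h nu); by rewrite !U.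
- move=> P P' vP vP' E mu.
  have S : forall (pi : assignment n H -> R) lam,
    \sum_mu0 pi mu0 * ((#|Nset P mu0 lam|)%:R - (#|Nset P lam mu0|)%:R) =
    \sum_mu0 pi mu0 * ((#|Nset P' mu0 lam|)%:R - (#|Nset P' lam mu0|)%:R).
    by move=> pi lam; apply: eq_bigr => mu0 _; rewrite !(counts_eq eqH vP vP' E).
  split; case=> pi [[dist pos] pmu]; exists pi; split => //; split => // lam.
    by rewrite -S.
  by rewrite S.
Qed.
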